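(* Let $n\ge1$, $0\le c_0<c_1<\dots<c_n$, $v_0\ge v_1\ge\dots\ge v_n>0$. (1) Let $A=(a_{jk})_{j,k=0}^n$ with $a_{jk}=v_k-c_k$ if $j>k$, $a_{kk}=\frac{v_k}{2}-c_k$, $a_{jk}=-c_j$ if $j<k$. (2) Let $0\le\rho_k<\frac{v_k}{2}$ for $k=0,\dots,n$ and let $B=(b_{jk})_{j,k=0}^n$ with $b_{jk}=v_k-c_k$ if $j>k$, $b_{kk}=\frac{v_k}{2}-c_k-\rho_k$, $b_{jk}=-c_j$ if $j<k$. For each of these pay-off matrices there exists a unique ESS, and the pay-off matrix is conditionally negative definite.
   Context: Strategies are indexed $0,\dots,n$; the set of mixed strategies is $\overline\Delta=\{\mathbf{q}\in[0,1]^{n+1}:\sum_j q_j=1\}$. For a matrix $M$, $\mathbf{p}\in\overline\Delta$ is an ESS for $M$ if (i) $\mathbf{p}^TM\mathbf{p}\ge\mathbf{q}^TM\mathbf{p}$ for all $\mathbf{q}\in\overline\Delta$ and (ii) whenever $\mathbf{q}\ne\mathbf{p}$ and $\mathbf{p}^TM\mathbf{p}=\mathbf{q}^TM\mathbf{p}$, then $\mathbf{p}^TM\mathbf{q}>\mathbf{q}^TM\mathbf{q}$. $M\in\mathbb{R}^{(n+1)\times(n+1)}$ is conditionally negative definite if $\mathbf{y}^TM\mathbf{y}<0$ for all nonzero $\mathbf{y}\in\mathbb{R}^{n+1}$ with $\sum_j y_j=0$. *)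

(* Defs.v *)
(* Strategies 0..n are indexed by 'I_(n.+1). *)
From HB Require Import structures.
From mathcomp Require Import all_boot all_order all_algebra.
From mathcomp Require Import reals.
Set Implicit Arguments. Unset Strict Implicit. Unset Printing Implicit Defensive.
Import Order.TTheory GRing.Theory Num.Theory.
Local Open Scope ring_scope.

Section Defs.
Variable R : realType.

Definition mixed_strategy (n : nat) (q : 'cV[R]_(n.+1)) : Prop :=
  (forall j, 0 <= q j 0 <= 1) /\ \sum_j q j 0 = 1.

Definition bil (n : nat) (p : 'cV[R]_(n.+1)) (M : 'M[R]_(n.+1))
  (q : 'cV[R]_(n.+1)) : R := (p^T *m M *m q) 0 0.

Definition is_ESS (n : nat) (M : 'M[R]_(n.+1)) (p : 'cV[R]_(n.+1)) : Prop :=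
  mixed_strategy p /\
  (forall q, mixed_strategy q -> bil q M p <= bil p M p) /\
  (forall q, mixed_strategy q -> q <> p -> bil p M p = bil q M p ->
     bil q M q < bil p M q).

Definition cond_neg_def (n : nat) (M : 'M[R]_(n.+1)) : Prop :=
  forall y : 'cV[R]_(n.+1), y != 0 -> \sum_j y j 0 = 0 -> bil y M y < 0.

Definition payoffA (n : nat) (c v : 'I_(n.+1) -> R) : 'M[R]_(n.+1) :=
  \matrix_(j, k) (if (k < j)%N then v k - c k
                  else if j == k then v k / 2 - c k else - c j).

Definition payoffB (n : nat) (c v rho : 'I_(n.+1) -> R) : 'M[R]_(n.+1) :=
  \matrix_(j, k) (if (k < j)%N then v k - c k
                  else if j == k then v k / 2 - c k - rho k else - c j).
End Defs.

(* Main.v *)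
Require Import Defs.
From HB Require Import structures.
From mathcomp Require Import all_boot all_order all_algebra.
From mathcomp Require Import reals.
From mathcomp Require Import ring lra.
Import Order.TTheory GRing.Theory Num.Theory.
Local Open Scope ring_scope.

Lemma bil_sum (R : realType) n (p : 'cV[R]_(n.+1)) M q :
  bil p M q = \sum_j \sum_k p j 0 * M j k * q k 0.
Proof.
rewrite /bil -mulmxA mxE; apply: eq_bigr => j _.
rewrite !mxE mulr_sumr; apply: eq_bigr => k _; rewrite ?mxE; ring.
Qed.

Lemma double_prod (R : realType) n (f g : 'I_n -> R) :
  \sum_j \sum_k f j * g k = (\sum_j f j) * (\sum_k g k).
Proof. by rewrite mulr_suml; apply: eq_bigr => j _; rewrite mulr_sumr. Qed.

Lemma bil_diff (R : realType) n (p q : 'cV[R]_(n.+1)) M :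
  bil (q - p) M (q - p) = bil q M q - bil q M p - bil p M q + bil p M p.
Proof.
rewrite !bil_sum -!sumrB -big_split /=; apply: eq_bigr => j _.
rewrite -!sumrB -big_split /=; apply: eq_bigr => k _.
rewrite ?mxE; ring.
Qed.

Lemma tel (R : realType) (D : nat -> R) i :
  \sum_(0 <= m < i.+1) (D m.-1 - D m) = D 0%N - D i.
Proof.
elim: i => [|i IH]; first by rewrite big_nat1 /=.
by rewrite big_nat_recr //= IH; ring.
Qed.

Lemma tel2 (R : realType) (D : nat -> R) n i : (i <= n)%N ->
  \sum_(m < n.+1) (D m.-1 - D m) * (m <= i)%N%:R = D 0%N - D i.
Proof.
move=> hi; rewrite -(big_mkord xpredT (fun m => (D m.-1 - D m) * (m <= i)%N%:R)).
rewrite (big_cat_nat _ (n:=i.+1)) //=.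
rewrite [X in _ + X]big1_seq ?addr0; last first.
  move=> m /andP[_]; rewrite mem_index_iota => /andP[h _].
  by rewrite leqNgt h mulr0.
rewrite -tel; apply: eq_big_nat => m /andP[_ h].
by rewrite -ltnS h mulr1.
Qed.

Lemma cnd_B (R : realType) n (c v rho : 'I_(n.+1) -> R) :
  (forall j k : 'I_(n.+1), (j < k)%N -> c j < c k) ->
  (forall j k : 'I_(n.+1), (j <= k)%N -> v k <= v j) ->
  (forall k, 0 <= rho k) ->
  cond_neg_def (payoffB c v rho).
Proof.
move=> hc hv hr y y0 sy.
pose yy := fun k : 'I_(n.+1) => (y k 0 : R).
pose D := fun i : nat => v (inord i) / 2 - c (inord i).
pose w := fun m : nat => D m.-1 - D m.
pose T := fun m : nat => \sum_(j < n.+1) (m <= j)%N%:R * yy j.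
pose M := payoffB c v rho.
have key : forall j k : 'I_(n.+1),
  yy k * M k j * yy j + yy j * M j k * yy k =
  2 * (yy j * yy k * D (minn j k)) - (if k == j then 2 * (rho j * yy j ^+ 2) else 0).
  move=> j k; rewrite /M !mxE; case: (ltngtP j k) => h.
  - have e1 : (k == j) = false by apply/eqP => e; move: h; rewrite e ltnn.
    have e2 : (j == k) = false by apply/eqP => e; move: h; rewrite e ltnn.
    rewrite ?e1 ?e2 /D inord_val; by field.
  - have e1 : (k == j) = false by apply/eqP => e; move: h; rewrite e ltnn.
    have e2 : (j == k) = false by apply/eqP => e; move: h; rewrite e ltnn.
    rewrite ?e1 ?e2 /D inord_val; by field.
  - have e : j = k by apply: val_inj.
    subst k; rewrite eqxx /D inord_val; by field.
have E1 : bil y M y = \sum_(j < n.+1) \sum_(k < n.+1) yy j * yy k * D (minn j k)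
                      - \sum_(j < n.+1) rho j * yy j ^+ 2.
  have : bil y M y + bil y M y =
     2 * \sum_(j < n.+1) \sum_(k < n.+1) yy j * yy k * D (minn j k) - 2 * \sum_(j < n.+1) rho j * yy j ^+ 2.
    rewrite {1}bil_sum exchange_big /= bil_sum -big_split /=.
    rewrite mulr_sumr mulr_sumr -sumrB; apply: eq_bigr => j _.
    rewrite -big_split /= mulr_sumr.
    have -> : 2 * (rho j * yy j ^+ 2) =
       \sum_(k < n.+1) (if k == j then 2 * (rho j * yy j ^+ 2) else 0).
      by rewrite -big_mkcond /= big_pred1_eq.
    rewrite -sumrB; apply: eq_bigr => k _; exact: key.
  move=> h; lra.
have pw : forall j k : 'I_(n.+1), D (minn j k) =
    D 0%N - \sum_(m < n.+1) w m * ((m <= j)%N%:R * (m <= k)%N%:R).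
  move=> j k.
  have ht := @tel2 R D n (minn j k) (leq_trans (geq_minl _ _) (ltn_ord j : (j <= n)%N)).
  have -> : \sum_(m < n.+1) w m * ((m <= j)%N%:R * (m <= k)%N%:R) =
            \sum_(m < n.+1) (D m.-1 - D m) * (m <= minn j k)%N%:R.
    apply: eq_bigr => m _; rewrite /w leq_min.
    by rewrite -mulnb natrM.
  rewrite ht; ring.
have E2 : \sum_(j < n.+1) \sum_(k < n.+1) yy j * yy k * D (minn j k) =
     D 0%N * (\sum_(j < n.+1) yy j) ^+ 2 - \sum_(m < n.+1) w m * T m ^+ 2.
  transitivity (\sum_(j < n.+1) \sum_(k < n.+1) (yy j * yy k * D 0%N -
     \sum_(m < n.+1) w m * (((m <= j)%N%:R * yy j) * ((m <= k)%N%:R * yy k)))).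
    apply: eq_bigr => j _; apply: eq_bigr => k _.
    rewrite pw mulrBr mulr_sumr; congr (_ - _); apply: eq_bigr => m _; ring.
  rewrite (eq_bigr (fun j => \sum_(k < n.+1) (yy j * yy k * D 0%N) -
     \sum_(k < n.+1) \sum_(m < n.+1) w m * (((m <= j)%N%:R * yy j) * ((m <= k)%N%:R * yy k))));
    last by move=> j _; rewrite sumrB.
  rewrite sumrB; congr (_ - _).
    rewrite expr2 -double_prod mulr_sumr; apply: eq_bigr => j _.
    rewrite mulr_sumr; apply: eq_bigr => k _; ring.
  under eq_bigr => j _ do rewrite exchange_big.
  rewrite exchange_big; apply: eq_bigr => m _.
  rewrite /T expr2 -double_prod mulr_sumr; apply: eq_bigr => j _.
  rewrite mulr_sumr; apply: eq_bigr => k _; ring.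
have wpos : forall m : 'I_(n.+1), (0 < m)%N -> 0 < w m.
  move=> m hm; rewrite /w /D.
  have h1 : (m.-1 < n.+1)%N by rewrite (leq_ltn_trans (leq_pred _)).
  have hvv : v (inord m) <= v (inord m.-1).
    by apply: hv; rewrite !inordK // leq_pred.
  have hcc : c (inord m.-1) < c (inord m).
    by apply: hc; rewrite !inordK // prednK.
  lra.
have w0 : forall m : 'I_(n.+1), 0 <= w m * T m ^+ 2.
  move=> m; case: (posnP m) => hm.
    by rewrite /w hm subrr mul0r.
  by rewrite mulr_ge0 ?sqr_ge0 // ltW // wpos.
have S0 : \sum_(j < n.+1) yy j = 0 by [].
have Y0 : 0 <= \sum_(j < n.+1) rho j * yy j ^+ 2.
  by apply: sumr_ge0 => j _; rewrite mulr_ge0 ?sqr_ge0.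
have X0 : \sum_(m < n.+1) w m * T m ^+ 2 != 0.
  apply/eqP => hX.
  have Tz : forall m : nat, T m = 0.
    move=> m; case: (posnP m) => hm.
      rewrite hm /T; rewrite -[RHS]S0; apply: eq_bigr => j _; by rewrite /= mul1r.
    case: (leqP m n) => hmn.
      have := psumr_eq0P (fun m _ => w0 m) hX (i := Ordinal (hmn : (m < n.+1)%N)) isT.
      move/eqP; rewrite mulf_eq0 sqrf_eq0 => /orP[|/eqP //].
      by rewrite gt_eqF // (wpos (Ordinal (hmn : (m < n.+1)%N))).
    rewrite /T big1 // => j _.
    have : (j < m)%N by rewrite (leq_trans (ltn_ord j)).
    by rewrite ltnNge => /negbTE ->; rewrite mul0r.
  move/eqP: y0; apply; apply/matrixP => j i; rewrite (ord1 i) mxE.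
  have : yy j = T j - T j.+1.
    rewrite /T -sumrB (bigD1 j) //= leqnn ltnn mul0r subr0 mul1r big1 ?addr0 //.
    move=> k /negbTE hk; case: (ltngtP j k) => h.
    - by rewrite subrr.
    - by rewrite subrr.
    - by move: hk; rewrite (val_inj h) eqxx.
  by rewrite !Tz subrr.
rewrite E1 E2 S0 expr0n /= mulr0 add0r.
have : 0 < \sum_(m < n.+1) w m * T m ^+ 2.
  by rewrite lt0r X0 sumr_ge0 // => m _; exact: w0.
lra.
Qed.

From mathcomp Require Import zify.

Lemma bil_col (R : realType) n (p : 'cV[R]_(n.+1)) M q :
  bil p M q = \sum_j p j 0 * (M *m q) j 0.
Proof. by rewrite /bil -mulmxA mxE; apply: eq_bigr => j _; rewrite mxE. Qed.

Lemma Mx_upd (R : realType) n (M : 'M[R]_(n.+1)) (x : 'cV[R]_(n.+1)) t j0 k :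
  (M *m (x + t *: delta_mx j0 0)) k 0 = (M *m x) k 0 + t * M k j0.
Proof. by rewrite mulmxDr -scalemxAr -colE !mxE. Qed.

Lemma nash_exists (R : realType) n (M : 'M[R]_(n.+1)) :
  (forall j k : 'I_(n.+1), (j < k)%N -> M k j = M ord_max j) ->
  (forall j : 'I_(n.+1), (j < n)%N -> M j j < M ord_max j) ->
  exists p, mixed_strategy p /\
    forall q, mixed_strategy q -> bil q M p <= bil p M p.
Proof.
move=> hM1 hM2.
have inv : forall i, (i <= n)%N -> exists x : 'cV[R]_(n.+1),
  [/\ x ord_max 0 = 1, forall k, 0 <= x k 0,
      forall k : 'I_(n.+1), (k < n - i)%N -> x k 0 = 0 &
      forall k : 'I_(n.+1), (n - i <= k)%N ->
        (M *m x) k 0 <= (M *m x) ord_max 0 /\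
        (x k 0 != 0 -> (M *m x) k 0 = (M *m x) ord_max 0)].
  elim => [_|i IH hi].
  - exists (delta_mx ord_max 0); split.
    + by rewrite mxE !eqxx.
    + by move=> k; rewrite mxE ler0n.
    + move=> k hk; rewrite mxE.
      have -> : (k == ord_max) = false.
        by apply/eqP => e; move: hk; rewrite e subn0 ltnn.
      by [].
    + move=> k; rewrite subn0 => hk.
      have e : k = ord_max.
        by apply/val_inj; apply/eqP; rewrite eqn_leq hk -ltnS ltn_ord.
      by subst k; split.
  have [x [x1 x0 xz xn]] := IH (ltnW hi).
  pose j0 : 'I_(n.+1) := inord (n - i.+1).
  have hj0 : (j0 : nat) = (n - i.+1)%N by rewrite /j0 inordK // ltnS leq_subr.
  pose a := (M *m x) j0 0 - (M *m x) ord_max 0.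
  pose b := M ord_max j0 - M j0 j0.
  have bpos : 0 < b by rewrite subr_gt0; apply: hM2; rewrite hj0; lia.
  pose t := if a <= 0 then 0 else a / b.
  have t0 : 0 <= t.
    rewrite /t; case: ifP => // /negbT; rewrite -ltNge => ha.
    by rewrite divr_ge0 // ltW.
  have tab : a - t * b <= 0 /\ (t != 0 -> a - t * b = 0).
    rewrite /t; case: ifP => ha; first by rewrite mul0r subr0 eqxx.
    rewrite divfK; last by rewrite gt_eqF.
    by rewrite subrr lexx.
  have xj0 : x j0 0 = 0 by apply: xz; rewrite hj0; lia.
  have nmax : (ord_max == j0) = false.
    by apply/eqP => e; move: hj0; rewrite -e /=; lia.
  exists (x + t *: delta_mx j0 0); split.
  - by rewrite !mxE nmax /= mulr0 addr0.
  - by move=> k; rewrite !mxE addr_ge0 // mulr_ge0.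
  - move=> k hk; rewrite !mxE.
    have -> : (k == j0) = false by apply/eqP => e; move: hk; rewrite e hj0 ltnn.
    by rewrite mulr0 addr0 xz //; lia.
  - move=> k hk; rewrite !Mx_upd.
    case: (eqVneq k j0) => [->|kj].
      have ex : (x + t *: delta_mx j0 0) j0 0 = t.
        by rewrite !mxE eqxx xj0 add0r mulr1.
      rewrite ex; case: tab => h1 h2; split.
        by rewrite /a /b in h1; lra.
      by move=> /h2; rewrite /a /b => h; lra.
    have hk' : (n - i <= k)%N.
      have : (k : nat) != (j0 : nat) by [].
      by rewrite hj0; move: hk; lia.
    have e : M k j0 = M ord_max j0 by apply: hM1; rewrite hj0; lia.
    have ex : (x + t *: delta_mx j0 0) k 0 = x k 0.
      by rewrite !mxE (negbTE kj) /= mulr0 addr0.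
    rewrite e ex.
    case: (xn k hk') => h1 h2; split; first by lra.
    by move=> /h2 ->.
have [x [x1 x0 _ xn]] := inv n (leqnn n).
rewrite subnn in xn.
pose s := \sum_k x k 0.
have xles : forall k, x k 0 <= s.
  move=> k; rewrite /s (bigD1 k) //= lerDl sumr_ge0 // => j _; exact: x0.
have s1 : 1 <= s by rewrite -x1; exact: xles.
have spos : 0 < s by lra.
pose u := (M *m x).
have Mp : forall k, (M *m (s^-1 *: x)) k 0 = s^-1 * u k 0.
  by move=> k; rewrite -scalemxAr mxE.
exists (s^-1 *: x); split.
  split.
    move=> k; rewrite mxE; apply/andP; split; first by rewrite mulr_ge0 // invr_ge0 ltW.
    by rewrite ler_pdivrMl // mulr1; exact: xles.
  rewrite (eq_bigr (fun k => s^-1 * x k 0)); last by move=> k _; rewrite mxE.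
  by rewrite -mulr_sumr mulVf // gt_eqF.
move=> q [q01 q1].
have hpp : bil (s^-1 *: x) M (s^-1 *: x) = s^-1 * u ord_max 0.
  rewrite bil_col (eq_bigr (fun k => s^-1 * x k 0 * (s^-1 * u ord_max 0))).
    by rewrite -mulr_suml -mulr_sumr mulVf ?gt_eqF // mul1r.
  move=> k _; rewrite Mp mxE.
  case: (eqVneq (x k 0) 0) => [->|hk]; first by rewrite !mulr0 !mul0r.
  by case: (xn k (leq0n _)) => _ /(_ hk) ->.
rewrite hpp bil_col.
apply: (le_trans (y := \sum_k q k 0 * (s^-1 * u ord_max 0))).
  apply: ler_sum => k _; rewrite Mp; apply: ler_wpM2l; first by case/andP: (q01 k).
  apply: ler_wpM2l; first by rewrite invr_ge0 ltW.
  by case: (xn k (leq0n _)).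
by rewrite -mulr_suml q1 mul1r.
Qed.

Lemma ess_of_cnd (R : realType) n (M : 'M[R]_(n.+1)) :
  cond_neg_def M ->
  (exists p, mixed_strategy p /\
    forall q, mixed_strategy q -> bil q M p <= bil p M p) ->
  exists! p, is_ESS M p.
Proof.
move=> hc [p [mp hp]].
have sum0 : forall p q : 'cV[R]_(n.+1), mixed_strategy p -> mixed_strategy q ->
    \sum_j (q - p) j 0 = 0.
  move=> p1 q1 [_ s1] [_ s2].
  rewrite (eq_bigr (fun j => q1 j 0 - p1 j 0)) ?sumrB ?s1 ?s2 ?subrr // => j _.
  by rewrite !mxE.
exists p; split.
  split; first done; split; first done.
  move=> q mq nqp he.
  have hne : q - p != 0 by rewrite subr_eq0; apply/eqP.
  have := hc (q - p) hne (sum0 _ _ mp mq).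
  rewrite bil_diff => h; lra.
move=> p' [mp' [hp' _]].
case: (eqVneq p' p) => [-> //|ne].
have hne : p' - p != 0 by rewrite subr_eq0.
have := hc (p' - p) hne (sum0 _ _ mp mp').
rewrite bil_diff => h.
exfalso; have := hp p' mp'; have := hp' p mp; lra.
Qed.

Theorem lemma5p1 (R : realType) (n : nat) (c v rho : 'I_(n.+1) -> R) :
  (1 <= n)%N ->
  0 <= c ord0 ->
  (forall j k : 'I_(n.+1), (j < k)%N -> c j < c k) ->
  (forall j k : 'I_(n.+1), (j <= k)%N -> v k <= v j) ->
  0 < v ord_max ->
  (forall k, 0 <= rho k /\ rho k < v k / 2) ->
  ((exists! p, is_ESS (payoffA c v) p) /\ cond_neg_def (payoffA c v)) /\
  ((exists! p, is_ESS (payoffB c v rho) p) /\ cond_neg_def (payoffB c v rho)).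
Proof.
move=> hn hc0 hc hv hvn hrho.
have vpos : forall k, 0 < v k.
  by move=> k; apply: (lt_le_trans hvn); apply: hv; rewrite -ltnS.
have gen : forall r : 'I_(n.+1) -> R, (forall k, 0 <= r k) ->
    (exists! p, is_ESS (payoffB c v r) p) /\ cond_neg_def (payoffB c v r).
  move=> r hr; have C := @cnd_B R n c v r hc hv hr; split => //.
  apply: (@ess_of_cnd R n _ C); apply: (@nash_exists R n).
  - move=> j k hjk; rewrite !mxE hjk.
    have -> : (j < @ord_max n)%N by rewrite /=; move: (ltn_ord k) hjk; lia.
    by [].
  - move=> j hj; rewrite !mxE ltnn eqxx.
    have -> : (j < @ord_max n)%N by [].
    have := vpos j; have := hr j; lra.
have eA : payoffA c v = payoffB c v (fun _ => 0).
  by apply/matrixP => j k; rewrite !mxE subr0.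
split; first by rewrite eA; apply: gen.
by apply: gen => k; case: (hrho k).
Qed.
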